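(* Let $X$ be a proper CAT(0) space or a disjoint union of countably many proper CAT(0) spaces, endowed with an isometric action of a group $\Gamma$ having discrete orbits. Then $X$ has a locally finite $\Gamma$-good cover $\mathcal{U}$.
   Context: In a disjoint union of metric spaces, points in different pieces are at distance $\infty$. A $\Gamma$-good cover of such $X$ is a cover $\mathcal{U}$ of $X$ by open metric balls such that (1) $\Gamma\cdot\mathcal{U}=\mathcal{U}$, and (2) if $B\in\mathcal{U}$, $\gamma\in\Gamma$ and $\gamma\cdot B\cap B\neq\emptyset$, then $\gamma\cdot B=B$. *)

(* Defs.v *)
From HB Require Import structures.
From mathcomp Require Import all_boot all_order all_algebra.
From mathcomp Require Import all_classical all_reals ereal.
Set Implicit Arguments. Unset Strict Implicit. Unset Printing Implicit Defensive.
Import Order.TTheory GRing.Theory Num.Theory.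
Local Open Scope classical_set_scope.
Local Open Scope ring_scope.

Section Defs.
Variable R : realType.

Section Metric.
Variables (T : Type) (d : T -> T -> R).

Definition is_metric : Prop :=
  (forall x y, d x y = 0 <-> x = y) /\
  (forall x y, d x y = d y x) /\
  (forall x y z, d x z <= d x y + d y z).

Definition rball (x : T) (r : R) : set T := [set y | d x y < r].
Definition rcball (x : T) (r : R) : set T := [set y | d x y <= r].

Definition ropen (U : set T) : Prop :=
  forall x, U x -> exists2 e : R, 0 < e & rball x e `<=` U.

Definition rcompact (K : set T) : Prop :=
  forall F : set (set T), (forall U, F U -> ropen U) ->
    K `<=` \bigcup_(U in F) U ->
    exists F', [/\ F' `<=` F, finite_set F' & K `<=` \bigcup_(U in F') U].

Definition is_proper : Prop := forall x r, rcompact (rcball x r).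

Definition geodesic (c : R -> T) (a b : T) : Prop :=
  [/\ c 0 = a, c (d a b) = b &
     forall s t, 0 <= s <= d a b -> 0 <= t <= d a b -> d (c s) (c t) = `|s - t|].

Definition geodesic_space : Prop := forall a b, exists c, geodesic c a b.

Definition eucl (p q : R * R) : R :=
  Num.sqrt ((p.1 - q.1) ^+ 2 + (p.2 - q.2) ^+ 2).
Definition lerp (p q : R * R) (t : R) : R * R :=
  (p.1 + t * (q.1 - p.1), p.2 + t * (q.2 - p.2)).

(* x lies on the geodesic side c from a to b, and xb is its comparison point
   on the comparison side [ab, bb] *)
Definition onside (c : R -> T) (a b : T) (ab bb : R * R) (x : T) (xb : R * R)
  : Prop :=
  exists s, [/\ 0 <= s <= d a b, x = c s & xb = lerp ab bb (s / d a b)].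

Definition cat0_ineq : Prop :=
  forall (p q r : T) (cpq cqr crp : R -> T) (pb qb rb : R * R),
    geodesic cpq p q -> geodesic cqr q r -> geodesic crp r p ->
    eucl pb qb = d p q -> eucl qb rb = d q r -> eucl rb pb = d r p ->
    forall x y xb yb,
      (onside cpq p q pb qb x xb \/ onside cqr q r qb rb x xb \/
       onside crp r p rb pb x xb) ->
      (onside cpq p q pb qb y yb \/ onside cqr q r qb rb y yb \/
       onside crp r p rb pb y yb) ->
      d x y <= eucl xb yb.

Definition is_CAT0 : Prop := [/\ is_metric, geodesic_space & cat0_ineq].

Definition proper_CAT0 : Prop := is_CAT0 /\ is_proper.

End Metric.

Section Union.
Variables (I : Type) (Xi : I -> Type) (di : forall i, Xi i -> Xi i -> R).

Definition union_dist (u v : {i : I & Xi i}) : \bar R :=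
  match pselect (projT1 v = projT1 u) with
  | left e => ((di (projT2 u) (eq_rect _ Xi (projT2 v) _ e))%:E)
  | right _ => +oo%E
  end.
End Union.

Definition is_group (G : Type) (mul : G -> G -> G) (one : G) (inv : G -> G)
  : Prop :=
  [/\ forall a b c, mul a (mul b c) = mul (mul a b) c,
      forall a, mul one a = a,
      forall a, mul a one = a,
      forall a, mul (inv a) a = one &
      forall a, mul a (inv a) = one].

Section Action.
Variables (X : Type) (D : X -> X -> \bar R).
Variables (G : Type) (mul : G -> G -> G) (one : G) (act : G -> X -> X).

Definition isometric_action : Prop :=
  [/\ forall x, act one x = x,
      forall g h x, act (mul g h) x = act g (act h x) &
      forall g x y, D (act g x) (act g y) = D x y].

Definition discrete_orbits : Prop :=
  forall x, exists2 e : R, 0 < e &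
    forall g, (D x (act g x) < e%:E)%E -> act g x = x.

Definition eball (x : X) (r : R) : set X := [set y | (D x y < r%:E)%E].

Definition open_metric_ball (B : set X) : Prop :=
  exists x r, 0 < r /\ B = eball x r.

Definition good_cover (U : set (set X)) : Prop :=
  [/\ forall B, U B -> open_metric_ball B,
      forall y, exists2 B, U B & B y,
      forall g S, U S <-> exists2 B, U B & S = act g @` B &
      forall g B, U B -> act g @` B `&` B !=set0 -> act g @` B = B].

Definition locally_finite (U : set (set X)) : Prop :=
  forall x, exists2 r : R, 0 < r &
    finite_set [set B | U B /\ B `&` eball x r !=set0].

End Action.
End Defs.

(* Main.v *)
Require Import Defs.
From HB Require Import structures.
From mathcomp Require Import all_boot all_order all_algebra.
From mathcomp Require Import all_classical all_reals ereal.
From mathcomp Require Import lra.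
Set Implicit Arguments. Unset Strict Implicit. Unset Printing Implicit Defensive.
Import Order.TTheory GRing.Theory Num.Theory.
Local Open Scope classical_set_scope.
Local Open Scope ring_scope.

Lemma finite_sel (T : Type) (Y : set T) (F : set (set T)) :
  finite_set F -> Y `<=` \bigcup_(B in F) B ->
  (forall B, F B -> forall a b, Y a -> Y b -> B a -> B b -> a = b) ->
  finite_set Y.
Proof.
move=> fF YF uniq.
case: (pselect (exists a, Y a)) => [[a0 Ya0]|nY]; last first.
  have -> : Y = set0 by apply/seteqP; split => // a Ya; case: nY; exists a.
  exact: finite_set0.
have : forall B : set T, exists z, (exists a, Y a /\ B a) -> Y z /\ B z.
  move=> B; case: (pselect (exists a, Y a /\ B a)) => [[a [Ya Ba]]|n].
    by exists a.
  by exists a0.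
case/choice => pick Hp.
apply: (sub_finite_set _ (finite_image pick fF)) => a Ya.
have [B FB Ba] := YF a Ya.
exists B => //.
have [Yp Bp] := Hp B (ex_intro _ a (conj Ya Ba)).
exact: (uniq B FB _ _ Yp Ya Bp Ba).
Qed.

Definition eopen (R : realType) (X : Type) (D : X -> X -> \bar R) (U : set X) :=
  forall x, U x -> exists2 e : R, 0 < e & Defs.eball D x e `<=` U.

Definition ecompact (R : realType) (X : Type) (D : X -> X -> \bar R) (K : set X) :=
  forall F : set (set X), (forall U, F U -> eopen D U) ->
    K `<=` \bigcup_(U in F) U ->
    exists F', [/\ F' `<=` F, finite_set F' & K `<=` \bigcup_(U in F') U].

Lemma eball_open (R : realType) (X : Type) (D : X -> X -> \bar R) :
  (forall x y, (0 <= D x y)%E) -> (forall x y z, (D x z <= D x y + D y z)%E) ->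
  forall x r, eopen D (Defs.eball D x r).
Proof.
move=> Dnn Dtri x r y; rewrite /eball /= => hxy.
case E: (D x y) => [d| |]; rewrite E in hxy.
- exists (r - d); first by rewrite subr_gt0 -lte_fin.
  move=> z /= hz; apply: le_lt_trans (Dtri x y z) _; rewrite E.
  apply: (@lt_le_trans _ _ (d%:E + (r - d)%:E)%E); first by rewrite lteD2lE.
  by rewrite -EFinD addrC subrK.
- by [].
- by have := Dnn x y; rewrite E.
Qed.

Lemma extract (R : realType) (X : Type) (D : X -> X -> \bar R) (A : set X)
  (J : set (set X)) (rad : X -> R) :
  (forall x, D x x = 0%E) -> (forall x y, (0 <= D x y)%E) ->
  (forall x y z, (D x z <= D x y + D y z)%E) ->
  finite_set J -> (forall K, J K -> ecompact D K) ->
  A `<=` \bigcup_(K in J) K -> (forall x, 0 < rad x) ->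
  (forall x, ~ A x -> exists2 t : R, 0 < t & Defs.eball D x t `<=` ~` A) ->
  exists C, [/\ finite_set C, C `<=` A &
    A `<=` \bigcup_(c in C) Defs.eball D c (rad c)].
Proof.
move=> D0 Dnn Dtri fJ cJ AJ rad0 Aco.
case: (pselect (exists a, A a)) => [[a0 Aa0]|nA]; last first.
  exists set0; split => // a Aa; case: nA; by exists a.

pose F := [set V | (exists2 x, A x & V = Defs.eball D x (rad x)) \/ V = ~` A].
have Fo : forall V, F V -> eopen D V.
  move=> V [[x _ ->]|->]; first exact: eball_open.
  by move=> y nAy; have [t t0 sub] := Aco y nAy; exists t.
have KF : forall K, J K -> K `<=` \bigcup_(U in F) U.
  move=> K JK z Kz; case: (pselect (A z)) => Az.
    exists (Defs.eball D z (rad z)); first by left; exists z.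
    by rewrite /eball /= D0 lte_fin rad0.
  by exists (~` A); [right|].
have : forall K, exists F', J K ->
    [/\ F' `<=` F, finite_set F' & K `<=` \bigcup_(U in F') U].
  move=> K; case: (pselect (J K)) => JK.
    by have [F' HF'] := cJ K JK F Fo (KF K JK); exists F'.
  by exists set0.
case/choice => FK HFK.
have fB : finite_set (\bigcup_(K in J) FK K).
  by apply: bigcup_finite => // K JK; case: (HFK K JK).
have : forall V : set X, exists c, (exists2 x, A x & V = Defs.eball D x (rad x)) ->
    A c /\ V = Defs.eball D c (rad c).
  move=> V; case: (pselect (exists2 x, A x & V = Defs.eball D x (rad x))).
    by move=> [x Ax ->]; exists x.
  by move=> n; exists a0.
case/choice => cen Hcen.
exists (cen @` [set V | (\bigcup_(K in J) FK K) V /\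
                        exists2 x, A x & V = Defs.eball D x (rad x)]).
split.
- by apply: finite_image; apply: (sub_finite_set _ fB) => V [].
- by move=> _ [V [_ HV] <-]; exact: (Hcen V HV).1.
- move=> z Az; have [K JK Kz] := AJ z Az.
  have [sub _ cov] := HFK K JK.
  have [V FKV Vz] := cov z Kz.
  case: (sub V FKV) => [HV|VO]; last by rewrite VO in Vz.
  exists (cen V); first by exists V => //; split => //; exists K.
  by have [_ <-] := Hcen V HV.
Qed.

Lemma general (R : realType) (X : Type) (D : X -> X -> \bar R) (G : Type)
  (mul : G -> G -> G) (one : G) (inv : G -> G) (act : G -> X -> X) (h : X -> R) :
  is_group mul one inv -> isometric_action D mul one act ->
  discrete_orbits D act ->
  (forall x, D x x = 0%E) -> (forall x y, (0 <= D x y)%E) ->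
  (forall x y, D x y = D y x) ->
  (forall x y z, (D x z <= D x y + D y z)%E) ->
  (forall x, 0 <= h x) ->
  (forall x y r, (D x y < r%:E)%E -> h y < h x + r) ->
  (forall r : R, exists2 J : set (set X), finite_set J &
      (forall K, J K -> ecompact D K) /\
      [set x | h x <= r] `<=` \bigcup_(K in J) K) ->
  exists U, good_cover D act U /\ locally_finite D U.
Proof.
move=> [mA m1l m1r mVl mVr] [a1 aM aD] Hdisc D0 Dnn Dsym Dtri h0 Hh Hcomp.
have actK g x : act g (act (inv g) x) = x by rewrite -aM mVr a1.
have actVK g x : act (inv g) (act g x) = x by rewrite -aM mVl a1.
have ballT a b c r s : (D a b < r%:E)%E -> (D b c < s%:E)%E ->
    (D a c < (r + s)%:E)%E.
  move=> h1 h2; apply: le_lt_trans (Dtri a b c) _; rewrite EFinD; exact: lteD.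
have img g x r : act g @` Defs.eball D x r = Defs.eball D (act g x) r.
  apply/seteqP; split => [_ [w hw <-]|z hz]; first by rewrite /Defs.eball /= aD.
  exists (act (inv g) z); last exact: actK.
  by rewrite /Defs.eball /= -(aD g) actK.
have : forall x, exists e : R,
    0 < e /\ forall g, (D x (act g x) < e%:E)%E -> act g x = x.
  by move=> x; have [e e0 He] := Hdisc x; exists e.
case/choice => e He.
pose s x := Num.min (e x) 1 / 2.
have s0 x : 0 < s x.
  by rewrite /s divr_gt0 // lt_min (He x).1 ltr01.
have sse x : s x + s x <= e x.
  rewrite /s; set m := Num.min _ _; have : m <= e x by rewrite /m ge_min lexx.
  lra.
have ss1 x : s x + s x <= 1.
  rewrite /s; set m := Num.min _ _; have : m <= 1 by rewrite /m ge_min lexx orbT.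
  lra.
have close g k c : (D (act g c) (act k c) < (e c)%:E)%E -> act g c = act k c.
  move=> H; have : (D c (act (mul (inv g) k) c) < (e c)%:E)%E.
    by rewrite aM -(aD g) actK.
  move/(He c).2 => E.
  by rewrite -{1}E -aM mA mVr m1l.
pose W (n : nat) := [set x | h x <= n%:R + 1 /\ forall g, n%:R <= h (act g x)].
have Wcov y : exists n g, W n (act g y).
  pose P (n : nat) := forall g, n%:R <= h (act g y).
  have [n [Pn nPn]] : exists n, P n /\ ~ P n.+1.
    apply: contrapT => nex.
    have allP : forall n, P n.
      elim => [|n IH]; first by move=> g; exact: h0.
      by apply: contrapT => nP; apply: nex; exists n.
    have := allP (Num.truncn (h y)).+1 one; rewrite a1.
    by rewrite leNgt truncnS_gt.
  move/existsNP: nPn => [g Hg]; exists n, g; split.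
    have Hlt : h (act g y) < n.+1%:R by rewrite ltNge; apply/negP.
    by rewrite natr1; exact: ltW.
  by move=> k; rewrite -aM; exact: Pn.
have Wco n x : ~ W n x -> exists2 t : R, 0 < t & Defs.eball D x t `<=` ~` W n.
  move/not_andP => [H|/existsNP [g Hg]].
  - have Hlt : n%:R + 1 < h x by rewrite ltNge; apply/negP.
    exists (h x - (n%:R + 1)); first by rewrite subr_gt0.
    move=> w; rewrite /Defs.eball /= => Hw [Hw1 _].
    rewrite Dsym in Hw; have := Hh _ _ _ Hw; lra.
  - have Hlt : h (act g x) < n%:R by rewrite ltNge; apply/negP.
    exists (n%:R - h (act g x)); first by rewrite subr_gt0.
    move=> w; rewrite /Defs.eball /= => Hw [_ Hw2].
    rewrite -(aD g) in Hw; have := Hh _ _ _ Hw; have := Hw2 g; lra.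
have WJ n : exists C, [/\ finite_set C, C `<=` W n &
    W n `<=` \bigcup_(c in C) Defs.eball D c (s c)].
  have [J fJ [cJ sJ]] := Hcomp (n%:R + 1).
  apply: (extract D0 Dnn Dtri fJ cJ) => //; last exact: Wco.
  by move=> x [Hx _]; exact: sJ.
have /choice[C HC] := WJ.
have orbfin c y : finite_set [set z | (exists g, z = act g c) /\ (D y z < 1%:E)%E].
  have [J fJ [cJ sJ]] := Hcomp (h y + 1).
  pose Fb := [set V | exists x, V = Defs.eball D x (e c / 2)].
  have : forall K, exists F', J K ->
      [/\ F' `<=` Fb, finite_set F' & K `<=` \bigcup_(U in F') U].
    move=> K; case: (pselect (J K)) => JK; last by exists set0.
    have [||F' HF'] := cJ K JK Fb; last by exists F'.
      by move=> V [x ->]; exact: eball_open.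
    move=> z Kz; exists (Defs.eball D z (e c / 2)); first by exists z.
    by rewrite /Defs.eball /= D0 lte_fin divr_gt0 // (He c).1.
  case/choice => FK HFK.
  apply: (@finite_sel _ _ (\bigcup_(K in J) FK K)).
  - by apply: bigcup_finite => // K JK; case: (HFK K JK).
  - move=> z [[g ->] Hz].
    have : h (act g c) <= h y + 1 by apply: ltW; exact: Hh Hz.
    move/sJ => [K JK Kz]; have [_ _ cov] := HFK K JK.
    have [V FV Vz] := cov _ Kz; exists V => //; by exists K.
  - move=> B [K JK FKB] a b [[g ->] _] [[k ->] _] Ba Bb.
    have [sub _ _] := HFK K JK; have [x Bx] := sub B FKB.
    rewrite Bx /Defs.eball /= in Ba Bb; apply: close.
    rewrite Dsym in Ba; have := ballT _ _ _ _ _ Ba Bb.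
    by rewrite -splitr.
pose U := [set S | exists n c g, C n c /\ S = Defs.eball D (act g c) (s c)].
exists U; split; [split|].
- by move=> B [n [c [g [_ ->]]]]; exists (act g c), (s c); split.
- move=> y; have [n [g Wg]] := Wcov y; have [fC CW cov] := HC n.
  have [c Cc Hc] := cov _ Wg.
  exists (Defs.eball D (act (inv g) c) (s c)); first by exists n, c, (inv g).
  by rewrite /Defs.eball /= -(actVK g y) aD.
- move=> g S; split.
  + move=> [n [c [k [Cc ->]]]].
    exists (Defs.eball D (act (mul (inv g) k) c) (s c)).
      by exists n, c, (mul (inv g) k).
    by rewrite img aM actK.
  + move=> [B [n [c [k [Cc ->]]]] ->]; exists n, c, (mul g k); split => //.
    by rewrite img aM.
- move=> g B [n [c [k [Cc ->]]]]; rewrite img => -[z [Hz1 Hz2]].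
  rewrite /Defs.eball /= in Hz1 Hz2; rewrite Dsym in Hz2.
  have := ballT _ _ _ _ _ Hz1 Hz2 => H.
  rewrite -aM (close (mul g k) k c) //.
  by rewrite -aM in H; apply: lt_le_trans H _; rewrite lee_fin.
- move=> y; exists (1 / 2); first by rewrite divr_gt0.
  pose N := (Num.truncn (h y + 1)).+1.
  apply: (@sub_finite_set _ _ (\bigcup_(n in `I_N) \bigcup_(c in C n)
     [set Defs.eball D z (s c) | z in
        [set z | (exists g, z = act g c) /\ (D y z < 1%:E)%E]])).
  + move=> B [[n [c [g [Cc ->]]]] [z [Hz1 Hz2]]].
    rewrite /Defs.eball /= in Hz1 Hz2; rewrite Dsym in Hz1.
    have Hyg : (D y (act g c) < 1%:E)%E.
      apply: lt_le_trans (ballT _ _ _ _ _ Hz2 Hz1) _.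
      rewrite lee_fin; have := ss1 c; lra.
    have [_ CW _] := HC n; have [_ Wn] := CW c Cc.
    exists n.
      rewrite /= -(ltr_nat R); apply: le_lt_trans (Wn g) _.
      apply: lt_trans (Hh _ _ _ Hyg) _; exact: truncnS_gt.
    exists c => //; exists (act g c) => //; split => //; by exists g.
  + apply: bigcup_finite; first exact: finite_II.
    move=> n _; apply: bigcup_finite; first by case: (HC n).
    move=> c _; apply: finite_image; exact: orbfin.
Qed.

Lemma metric_facts (R : realType) (T : Type) (d : T -> T -> R) :
  is_metric d ->
  [/\ forall x, d x x = 0, forall x y, 0 <= d x y, forall x y, d x y = d y x &
      forall x y z, d x z <= d x y + d y z].
Proof.
move=> [d0 [ds dt]].
have dd x : d x x = 0 by apply/d0.
split => // x y; have := dt x y x; rewrite dd (ds y x); lra.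
Qed.

Lemma case1 (R : realType) (X : Type) (d : X -> X -> R) :
     proper_CAT0 d ->
     forall (G : Type) (mul : G -> G -> G) (one : G) (inv : G -> G)
            (act : G -> X -> X),
       is_group mul one inv ->
       isometric_action (fun x y => (d x y)%:E) mul one act ->
       discrete_orbits (fun x y => (d x y)%:E) act ->
       exists U : set (set X),
         good_cover (fun x y => (d x y)%:E) act U /\
         locally_finite (fun x y => (d x y)%:E) U.
Proof.
move=> [[Hmet _ _] Hprop] G mul one inv act Hgrp Hiso Hdisc.
have [dd dnn dsym dtri] := metric_facts Hmet.
have D0 : forall x, ((fun x y => (d x y)%:E) x x = 0%E) by move=> x /=; rewrite dd.
have Dnn : forall x y, (0 <= (fun x y => (d x y)%:E) x y)%E by move=> x y /=; rewrite lee_fin.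
have Dsym : forall x y, (fun x y => (d x y)%:E) x y = (fun x y => (d x y)%:E) y x.
  by move=> x y /=; rewrite dsym.
have Dtri : forall x y z, ((fun x y => (d x y)%:E) x z <=
    (fun x y => (d x y)%:E) x y + (fun x y => (d x y)%:E) y z)%E.
  by move=> x y z /=; rewrite -EFinD lee_fin.
case: (pselect (exists p : X, True)) => [[p _]|nX].
- apply: (general (h := fun x => d p x) Hgrp Hiso Hdisc D0 Dnn Dsym Dtri) => //.
  + move=> x y r /=; rewrite lte_fin => H; have := dtri p x y; lra.
  + move=> r; exists [set rcball d p r]; first exact: finite_set1.
    split; last by move=> x Hx; exists (rcball d p r).
    move=> K ->; move=> F Fo cov; apply: Hprop => // U FU x Ux.
- apply: (general (h := fun x => 0) Hgrp Hiso Hdisc D0 Dnn Dsym Dtri) => //.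
  + by move=> x; case: nX; exists x.
  + move=> r; exists set0; first exact: finite_set0.
    by split => // x; case: nX; exists x.
Qed.

Lemma ud_eq (R : realType) (I : Type) (Xi : I -> Type)
  (di : forall i, Xi i -> Xi i -> R) i (a b : Xi i) :
  union_dist di (existT Xi i a) (existT Xi i b) = (di i a b)%:E.
Proof.
rewrite /union_dist /=; case: pselect => [e|]; last by [].
by rewrite (Prop_irrelevance e erefl).
Qed.

Lemma ud_neq (R : realType) (I : Type) (Xi : I -> Type)
  (di : forall i, Xi i -> Xi i -> R) i j (a : Xi i) (b : Xi j) :
  i <> j -> union_dist di (existT Xi i a) (existT Xi j b) = +oo%E.
Proof.
move=> ne; rewrite /union_dist /=; case: pselect => // e.
by case: ne; rewrite e.
Qed.

Definition qpt (I : Type) (Xi : I -> Type) (i : I) (b : Xi i) : Xi i :=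
  projT1 (cid (ex_intro (fun _ : Xi i => True) b Logic.I)).

Lemma qptE (I : Type) (Xi : I -> Type) (i : I) (a b : Xi i) :
  qpt a = qpt b.
Proof.
rewrite /qpt.
by rewrite (Prop_irrelevance (ex_intro (fun _ : Xi i => True) a Logic.I)
                             (ex_intro (fun _ : Xi i => True) b Logic.I)).
Qed.

Lemma case2 (R : realType) (I : Type) (Xi : I -> Type)
  (di : forall i, Xi i -> Xi i -> R) :
     countable [set: I] ->
     (forall i, proper_CAT0 (di i)) ->
     forall (G : Type) (mul : G -> G -> G) (one : G) (inv : G -> G)
            (act : G -> {i : I & Xi i} -> {i : I & Xi i}),
       is_group mul one inv ->
       isometric_action (union_dist di) mul one act ->
       discrete_orbits (union_dist di) act ->
       exists U : set (set {i : I & Xi i}),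
         good_cover (union_dist di) act U /\
         locally_finite (union_dist di) U.
Proof.
move=> /pcard_injP [f finj'] Hpc G mul one inv act Hgrp Hiso Hdisc.
have finj i j : f i = f j -> i = j by apply: finj'; rewrite in_setT.
have mf i : [/\ forall x, di i x x = 0, forall x y, 0 <= di i x y,
    forall x y, di i x y = di i y x &
    forall x y z, di i x z <= di i x y + di i y z].
  by case: (Hpc i) => [[Hm _ _] _]; exact: metric_facts.
have dd i (a : Xi i) : di i a a = 0 by case: (mf i).
have dnn i (a b : Xi i) : 0 <= di i a b by case: (mf i).
have dsym i (a b : Xi i) : di i a b = di i b a by case: (mf i).
have dtri i (a b c : Xi i) : di i a c <= di i a b + di i b c by case: (mf i).
have D0 : forall x, union_dist di x x = 0%E by case=> i a; rewrite ud_eq dd.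
have Dnn : forall x y, (0 <= union_dist di x y)%E.
  case=> i a [j b]; case: (pselect (i = j)) => [?|ne].
    by subst j; rewrite ud_eq lee_fin.
  by rewrite ud_neq // leey.
have Dsym : forall x y, union_dist di x y = union_dist di y x.
  case=> i a [j b]; case: (pselect (i = j)) => [?|ne].
    by subst j; rewrite !ud_eq dsym.
  by rewrite !ud_neq // => e; apply: ne.
have Dtri : forall x y z, (union_dist di x z <=
    union_dist di x y + union_dist di y z)%E.
  case=> i a [j b] [k c]; case: (pselect (i = k)) => [?|nik].
    subst k; case: (pselect (i = j)) => [?|nij].
      by subst j; rewrite !ud_eq -EFinD lee_fin.
    by rewrite (ud_neq _ _ _ nij) (ud_neq _ _ _ (fun e => nij (esym e))) addye // leey.
  rewrite (ud_neq _ _ _ nik); case: (pselect (i = j)) => [?|nij].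
    by subst j; rewrite ud_eq (ud_neq _ _ _ nik) addey.
  rewrite (ud_neq _ _ _ nij) addye //; have := Dnn (existT Xi j b) (existT Xi k c).
  by case: (union_dist di _ _).
pose h (x : {i : I & Xi i}) : R :=
  (f (projT1 x))%:R + di (projT1 x) (qpt (projT2 x)) (projT2 x).
apply: (general (h := h) Hgrp Hiso Hdisc D0 Dnn Dsym Dtri).
- by case=> i a; rewrite /h /= addr_ge0.
- case=> i a [j b] r; case: (pselect (i = j)) => [?|ne]; last by rewrite ud_neq.
  subst j; rewrite ud_eq lte_fin /h /= => H.
  have := dtri i (qpt a) a b; rewrite (qptE b a); lra.
- move=> r; pose N := (Num.truncn r).+1.
  pose Bm (m : nat) := [set x : {i : I & Xi i} | f (projT1 x) = m /\
     di (projT1 x) (qpt (projT2 x)) (projT2 x) <= r].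
  exists (Bm @` `I_N); first exact/finite_image/finite_II.
  split; last first.
    case=> i a; rewrite /h /= => H; exists (Bm (f i)).
      exists (f i) => //; rewrite /= -(ltr_nat R).
      apply: le_lt_trans (truncnS_gt r); have := dnn i (qpt a) a; lra.
    split => //=; have : 0 <= (f i)%:R :> R by []; lra.
  move=> _ [m _ <-]; rewrite /ecompact => F Fo cov.
  case: (pselect (exists x, Bm m x)) => [[[i a0] [fi Ha0]]|nB]; last first.
    exists set0; split => // x Bx; case: nB; by exists x.
  simpl in fi, Ha0.
  pose slice (V : set {i : I & Xi i}) := [set b : Xi i | V (existT Xi i b)].
  pose Fi := [set W | exists2 V, F V & W = slice V].
  have [||F' [F'Fi fF' covF']] := (Hpc i).2 (qpt a0) r Fi.
  + move=> W [V FV ->] b Vb.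
    have [e e0 sub] := Fo V FV _ Vb; exists e => // c Hc; apply: sub.
    by rewrite /Defs.eball /= ud_eq lte_fin.
  + move=> b Hb; have Bb : Bm m (existT Xi i b).
      by split => //=; rewrite (qptE b a0).
    have [V FV Vb] := cov _ Bb; exists (slice V) => //; by exists V.
  have : forall W, exists V, Fi W -> F V /\ W = slice V.
    move=> W; case: (pselect (Fi W)) => [[V FV ->]|nW]; first by exists V.
    by exists set0.
  case/choice => ch Hch.
  exists (ch @` F'); split.
  + by move=> _ [W FW <-]; exact: (Hch W (F'Fi W FW)).1.
  + exact: finite_image.
  + case=> j b [/= fj Hb].
    have eji : j = i by apply: finj; rewrite fj fi.
    subst j.
    have [|W FW Wb] := covF' b; first by rewrite /rcball /= (qptE a0 b).
    exists (ch W); first by exists W.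
    by have [_ E] := Hch W (F'Fi W FW); rewrite E in Wb.
Qed.

Theorem proposition4p2 (R : realType) :
  (* case 1: X a proper CAT(0) space *)
  (forall (X : Type) (d : X -> X -> R),
     proper_CAT0 d ->
     forall (G : Type) (mul : G -> G -> G) (one : G) (inv : G -> G)
            (act : G -> X -> X),
       is_group mul one inv ->
       isometric_action (fun x y => (d x y)%:E) mul one act ->
       discrete_orbits (fun x y => (d x y)%:E) act ->
       exists U : set (set X),
         good_cover (fun x y => (d x y)%:E) act U /\
         locally_finite (fun x y => (d x y)%:E) U) /\
  (* case 2: X a disjoint union of countably many proper CAT(0) spaces *)
  (forall (I : Type) (Xi : I -> Type) (di : forall i, Xi i -> Xi i -> R),
     countable [set: I] ->
     (forall i, proper_CAT0 (di i)) ->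
     forall (G : Type) (mul : G -> G -> G) (one : G) (inv : G -> G)
            (act : G -> {i : I & Xi i} -> {i : I & Xi i}),
       is_group mul one inv ->
       isometric_action (union_dist di) mul one act ->
       discrete_orbits (union_dist di) act ->
       exists U : set (set {i : I & Xi i}),
         good_cover (union_dist di) act U /\
         locally_finite (union_dist di) U).
Proof.
split; [exact: case1 | exact: case2].
Qed.
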